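(* Let $T$ be a tree of order $n\ge 2$ with set of support vertices $S=\{v_1,\dots,v_s\}$, where $v_i$ is adjacent to exactly $\ell_i$ leaves. Then $$\gamma^{0}_{st}(T)\ge -n+2\left(\left\lfloor\frac{\ell_1}{2}\right\rfloor+\cdots+\left\lfloor\frac{\ell_s}{2}\right\rfloor\right).$$ Moreover, equality holds if and only if $T\in\Omega$.
   Context: For a vertex $v$ of a graph $G=(V,E)$, $N(v)$ is its open neighborhood, and for $f:V\to\mathbb{R}$ and $B\subseteq V$ write $f(B)=\sum_{v\in B}f(v)$; $f(V)$ is the weight of $f$. An inverse signed total dominating function (ISTDF) of $G$ is a function $f:V\to\{-1,1\}$ such that $f(N(v))\le 0$ for every $v\in V$. The inverse signed total domination number $\gamma^{0}_{st}(G)$ is the maximum weight of an ISTDF of $G$. For a tree $T$: a leaf is a vertex of degree $1$; a support vertex is a vertex adjacent to at least one leaf; $L=L(T)$ and $S=S(T)$ denote the sets of leaves and of support vertices; for $w\in S$, $L_w$ is the set of leaves adjacent to $w$; $T'$ is the subgraph of $T$ induced by $S$, and $\Delta(T')$ its maximum degree. The family $\Omega$ consists of all trees $T$ such that either $T$ is isomorphic to the path $P_2$, or all of the following hold: (a) $|L_w|\ge 2$ for every support vertex $w$; (b) $\Delta(T')\le 1$; (b1) if $\Delta(T')=1$, then every vertex of $T$ is a leaf or a support vertex (i.e. $V=L\cup S$) and $|L_w|$ is even for every support vertex $w$; (b2) if $\Delta(T')=0$, then either $T$ is isomorphic to the star $K_{1,n-1}$, or each support vertex is adjacent to exactly one vertex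 of $V\setminus(L\cup S)$, every vertex of $V\setminus(L\cup S)$ has at least one neighbor in $S$, and $|L_w|$ is even for every support vertex $w$. *)

(* Defs.v *)
(* A (simple) graph is a symmetric irreflexive relation
   [adj : rel V] on a finite vertex type [V]. *)
From HB Require Import structures.
From mathcomp Require Import all_boot all_order all_algebra.
Set Implicit Arguments. Unset Strict Implicit. Unset Printing Implicit Defensive.
Import Order.TTheory GRing.Theory Num.Theory.

Section Defs.
Variables (V : finType) (adj : rel V).

Definition is_tree : Prop :=
  (forall x y : V, connect adj x y) /\
  ~ (exists c : seq V, [/\ 3 <= size c, uniq c & cycle adj c]).

Definition nbhd (v : V) : {set V} := [set u | adj v u].

Definition is_leaf (v : V) : bool := #|nbhd v| == 1.
Definition leaves_at (w : V) : {set V} := [set u in nbhd w | is_leaf u].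
Definition is_support (v : V) : bool := [exists u, adj v u && is_leaf u].

Definition fsum (f : V -> int) (B : {set V}) : int := \sum_(v in B) f v.
Definition weight (f : V -> int) : int := \sum_v f v.

Definition is_ISTDF (f : V -> int) : Prop :=
  (forall v, f v = 1%R \/ f v = (-1)%R) /\ (forall v, (fsum f (nbhd v) <= 0)%R).

(* functions V -> {-1,1} encoded by boolean finite functions *)
Definition sgn_fun (g : {ffun V -> bool}) : V -> int :=
  fun v => if g v then 1%R else (-1)%R.

Definition ISTDFb (g : {ffun V -> bool}) : bool :=
  [forall v, (fsum (sgn_fun g) (nbhd v) <= 0)%R].

(* gamma^0_st : maximum weight of an ISTDF (the all -1 function is always an
   ISTDF, so the arg max is over a nonempty set) *)
Definition gamma_st0 : int :=
  weight (sgn_fun (Order.arg_max [ffun => false] ISTDFb (fun g => weight (sgn_fun g)))).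

Definition istdf_bound : int :=
  (- (#|V|%:Z) + 2 * (\sum_(w | is_support w) (#|leaves_at w| %/ 2)%N)%:Z)%R.

Definition is_star : Prop := exists c : V, forall v, v != c -> adj c v.

Definition in_Omega : Prop :=
  #|V| = 2 \/
  [/\ (forall w, is_support w -> 2 <= #|leaves_at w|),
      (* (b) Delta(T') <= 1 *)
      (forall w, is_support w -> #|[set u in nbhd w | is_support u]| <= 1),
      (* (b1) Delta(T') = 1 *)
      ((exists w u, [/\ is_support w, is_support u & adj w u]) ->
         (forall v, is_leaf v || is_support v) /\
         (forall w, is_support w -> ~~ odd #|leaves_at w|))
    & (* (b2) Delta(T') = 0 *)
      (~ (exists w u, [/\ is_support w, is_support u & adj w u]) ->
         is_star \/
         [/\ (forall w, is_support w ->
                #|[set u in nbhd w | ~~ is_leaf u && ~~ is_support u]| = 1),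
             (forall v, ~~ is_leaf v -> ~~ is_support v ->
                exists w, is_support w && adj v w)
           & (forall w, is_support w -> ~~ odd #|leaves_at w|)])].

End Defs.

Lemma ISTDFb_correct (V : finType) (adj : rel V) (g : {ffun V -> bool}) :
  ISTDFb adj g -> is_ISTDF adj (sgn_fun g).
Proof.
move=> /forallP H; split=> [v|v]; last exact: H.
by rewrite /sgn_fun; case: (g v); [left|right].
Qed.

Lemma gamma_st0_spec (V : finType) (adj : rel V) :
  (exists f, is_ISTDF adj f /\ gamma_st0 adj = weight f) /\
  (forall f, is_ISTDF adj f -> (weight f <= gamma_st0 adj)%R).
Proof.
have H0 : ISTDFb adj [ffun => false].
  apply/forallP=> v; rewrite /fsum /sgn_fun.
  rewrite (eq_bigr (fun _ => (-1)%R)) => [|u _]; last by rewrite ffunE.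
  by rewrite sumr_const mulNrn oppr_le0 ler0n.
rewrite /gamma_st0; case: (arg_maxP _ H0) => g Hg Hmax.
split; first by exists (sgn_fun g); split=> //; exact: ISTDFb_correct.
move=> f [Hpm Hn].
pose g' := [ffun v => f v == 1%R].
have Ef : sgn_fun g' =1 f.
  by move=> v; rewrite /sgn_fun ffunE; case: (Hpm v) => ->.
have -> : weight f = weight (sgn_fun g') by apply: eq_bigr => v _; rewrite Ef.
apply: Hmax; apply/forallP=> v; rewrite /fsum.
by rewrite (eq_bigr (fun u => f u)) ?Hn // => u _; rewrite Ef.
Qed.

(* Main.v *)
Require Import Defs.
From HB Require Import structures.
From mathcomp Require Import all_boot all_order all_algebra zify.
Import Order.TTheory GRing.Theory Num.Theory.
Set Implicit Arguments. Unset Strict Implicit. Unset Printing Implicit Defensive.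

Section S.
Variables (V : finType) (adj : rel V).
Local Open Scope ring_scope.

Lemma sum_pm (f : V -> int) (A : {set V}) : (forall v, f v = 1 \/ f v = -1) ->
  \sum_(u in A) f u = (#|A :&: [set v | f v == 1]|%:Z * 2 - #|A|%:Z).
Proof.
move=> Hf.
rewrite (bigID [pred u | f u == 1]) /=.
rewrite (eq_bigr (fun=> 1)) => [|u /andP[_ /eqP]]//.
rewrite [X in _ + X](eq_bigr (fun=> -1)) => [|u /andP[_ H]]; last first.
  by case: (Hf u) H => ->.
rewrite !sumr_const.
have E1 : #|[pred i | (i \in A) && (f i == 1)]| = #|A :&: [set v | f v == 1]|.
  by apply: eq_card => i; rewrite !inE.
have E2 : #|[pred i | (i \in A) && ~~ (f i == 1)]| = #|A :\: [set v | f v == 1]|.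
  by apply: eq_card => i; rewrite !inE andbC.
rewrite E1 E2 -(cardsID [set v | f v == 1] A).
rewrite mulNrn; lia.
Qed.
Local Close Scope ring_scope.

Hypothesis Hsym : symmetric adj.
Hypothesis Hirr : irreflexive adj.

Notation N := (nbhd adj).
Notation leaf := (is_leaf adj).
Notation sup := (is_support adj).
Notation L := (leaves_at adj).

Definition NL w := [set u in N w | ~~ leaf u].
Definition slack w := (#|L w| %/ 2 < #|N w| %/ 2)%N.
Definition validP (P : {set V}) := forall v, 2 * #|N v :&: P| <= #|N v|.
Definition Bnd := (\sum_(w | sup w) (#|L w| %/ 2))%N.

Lemma inN u v : (u \in N v) = adj v u.
Proof. by rewrite inE. Qed.

Lemma leaf_nbr x u : leaf x -> adj x u -> N x = [set u].
Proof.
move=> /cards1P[a Ha] xu; have : u \in N x by rewrite inN.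
by rewrite Ha inE => /eqP->.
Qed.

Lemma leaf_uniq x u u' : leaf x -> adj x u -> adj x u' -> u = u'.
Proof.
move=> lx xu xu'; have := leaf_nbr lx xu.
move=> E; have : u' \in N x by rewrite inN.
by rewrite E inE => /eqP.
Qed.

Lemma L_sub w : L w \subset N w.
Proof. by apply/subsetP=> x; rewrite inE => /andP[]. Qed.

Lemma inL x w : (x \in L w) = adj w x && leaf x.
Proof. by rewrite !inE. Qed.

Lemma inNL x w : (x \in NL w) = adj w x && ~~ leaf x.
Proof. by rewrite !inE. Qed.

Lemma supP w : reflect (exists x, adj w x && leaf x) (sup w).
Proof. exact: existsP. Qed.

Lemma sup_of w x : adj w x -> leaf x -> sup w.
Proof. by move=> a l; apply/supP; exists x; rewrite a l. Qed.

Lemma L_pos w : sup w -> 0 < #|L w|.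
Proof. by case/supP=> x H; apply/card_gt0P; exists x; rewrite inL. Qed.

Lemma degsplit w : #|N w| = #|L w| + #|NL w|.
Proof.
rewrite -(cardsID [set u | leaf u] (N w)); congr (_ + _);
apply: eq_card => x; rewrite /NL /leaves_at !inE; [by [] | by rewrite andbC].
Qed.

Definition A w := [set x in take (#|L w| %/ 2) (enum (L w))].

Lemma A_card w : #|A w| = #|L w| %/ 2.
Proof.
rewrite cardsE; move/card_uniqP: (take_uniq (#|L w| %/ 2) (enum_uniq (pred_of_set (L w)))) ->.
by rewrite size_take -cardE; case: ltnP => // h; apply/eqP; rewrite eqn_leq h leq_div.
Qed.

Lemma A_sub w : A w \subset L w.
Proof. by apply/subsetP=> x; rewrite inE => /mem_take; rewrite mem_enum. Qed.

Definition P0 := \bigcup_(w | sup w) A w.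

Lemma P0_leaf x : x \in P0 -> exists2 w, sup w & x \in L w.
Proof.
by case/bigcupP=> w sw xa; exists w => //; apply: (subsetP (A_sub w)).
Qed.

Lemma NP0_sup w : sup w -> N w :&: P0 = A w.
Proof.
move=> sw; apply/setP=> x; rewrite inE; apply/andP/idP.
  case=> xn /bigcupP[w' sw' xa].
  have := subsetP (A_sub w') x xa; rewrite inL => /andP[a l].
  rewrite inN in xn.
  rewrite Hsym in a; rewrite Hsym in xn.
  by rewrite -(leaf_uniq l a xn).
move=> xa; split; last by apply/bigcupP; exists w.
by apply: (subsetP (L_sub w)); apply: (subsetP (A_sub w)).
Qed.

Lemma NP0_nsup v : ~~ sup v -> N v :&: P0 = set0.
Proof.
move=> nsv; apply/setP=> x; rewrite !inE; apply/negP=> /andP[xn /bigcupP[w sw xa]].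
have := subsetP (A_sub w) x xa; rewrite inL => /andP[_ l].
by move: nsv; rewrite (sup_of xn l).
Qed.

Lemma P0_valid : validP P0.
Proof.
move=> v; case: (boolP (sup v)) => sv; last by rewrite NP0_nsup // cards0.
rewrite NP0_sup // A_card; have := subset_leq_card (L_sub v); lia.
Qed.

Lemma card_sumb (Q : pred V) (F : V -> bool) :
  #|[set x | Q x && F x]| = \sum_(x | Q x) (F x : nat).
Proof.
rewrite -sum1_card [RHS]big_mkcond [LHS]big_mkcond /=.
by apply: eq_bigr => x _; rewrite !inE; case: (Q x); case: (F x).
Qed.

Lemma dc (P : {set V}) :
  \sum_(w | sup w) #|N w :&: P| = \sum_(x in P) #|[set w in N x | sup w]|.
Proof.
have E1 w : #|N w :&: P| = \sum_(x in P) (adj w x : nat).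
  rewrite -card_sumb; apply: eq_card => x; rewrite !inE andbC.
  by [].
have E2 x : #|[set w in N x | sup w]| = \sum_(w | sup w) (adj w x : nat).
  rewrite -card_sumb; apply: eq_card => w; rewrite !inE andbC Hsym.
  by [].
rewrite (eq_bigr _ (fun w _ => E1 w)) (eq_bigr _ (fun x _ => E2 x)).
exact: exchange_big.
Qed.

Lemma P0_card : Bnd <= #|P0|.
Proof.
rewrite /Bnd (eq_bigr (fun w => #|N w :&: P0|)); last first.
  by move=> w sw; rewrite NP0_sup // A_card.
rewrite dc -sum1_card; apply: leq_sum => x xP.
case/bigcupP: xP => w sw xa.
have := subsetP (A_sub w) x xa; rewrite inL => /andP[a l].
rewrite -(eqP l); apply: subset_leq_card; apply/subsetP=> y; rewrite inE => /andP[].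
by [].
Qed.

Lemma setI_U1_in (B P : {set V}) x : x \in B -> B :&: (x |: P) = x |: (B :&: P).
Proof.
move=> xB; apply/setP=> y; rewrite !inE; case: (eqVneq y x) => [->|] //=.
by rewrite xB.
Qed.

Lemma setI_U1_out (B P : {set V}) x : x \notin B -> B :&: (x |: P) = B :&: P.
Proof.
move=> xB; apply/setP=> y; rewrite !inE; case: (eqVneq y x) => [->|] //=.
by rewrite (negbTE xB).
Qed.

Lemma valid_nsup P : validP P -> forall w, sup w -> w \notin P.
Proof.
move=> H w /supP[x /andP[a l]]; apply/negP=> wP.
have := H x; rewrite Hsym in a; rewrite (leaf_nbr l a).
by rewrite (setIidPl _) ?sub1set // cards1.
Qed.

Lemma upper P :
  (forall w, sup w -> ~~ slack w) ->
  (forall v, ~~ leaf v -> ~~ sup v -> exists w, sup w && adj v w) ->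
  validP P -> #|P| <= Bnd.
Proof.
move=> H1 H2 HP.
apply: (@leq_trans (\sum_(w | sup w) #|N w :&: P|)).
  rewrite dc -sum1_card; apply: leq_sum => x xP.
  apply/card_gt0P.
  have nsx : ~~ sup x by apply: contraTN xP => sx; apply: valid_nsup.
  case: (boolP (leaf x)) => lx.
    have : 0 < #|N x| by rewrite (eqP lx).
    case/card_gt0P => u; rewrite inN => xu; exists u.
    by rewrite !inE xu (sup_of (_ : adj u x) lx) // Hsym.
  have [w /andP[sw a]] := H2 x lx nsx; exists w; by rewrite !inE a sw.
apply: leq_sum => w sw; have := H1 w sw; rewrite /slack; have := HP w; lia.
Qed.

Lemma improve :
  (exists w, sup w && slack w) \/
  (exists v, [/\ ~~ leaf v, ~~ sup v & forall w, sup w -> ~~ adj v w]) ->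
  exists P, validP P /\ Bnd < #|P|.
Proof.
case=> [[w /andP[sw sl]] | [v [lv sv Hv]]].
  have lpos := L_pos sw.
  have : ~~ (L w \subset A w).
    apply/negP=> /subset_leq_card; rewrite A_card; lia.
  case/subsetPn=> x xL xA.
  have xN : x \in N w := subsetP (L_sub w) x xL.
  have xP0 : x \notin P0.
    by apply: contra xA => xP; rewrite -(NP0_sup sw) inE xN.
  exists (x |: P0); split; last by rewrite cardsU1 xP0; have := P0_card; lia.
  move=> v; case: (boolP (x \in N v)) => xv; last first.
    by rewrite setI_U1_out //; apply: P0_valid.
  have ev : v = w.
    move: xL; rewrite inL => /andP[a l]; rewrite inN Hsym in xv; rewrite Hsym in a.
    exact: leaf_uniq l xv a.
  subst v; rewrite setI_U1_in // cardsU1 NP0_sup // xA A_card.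
  move: sl; rewrite /slack; lia.
have vP0 : v \notin P0.
  apply/negP=> /bigcupP[w sw xa]; have := subsetP (A_sub w) v xa.
  by rewrite inL (negbTE lv) andbF.
exists (v |: P0); split; last by rewrite cardsU1 vP0; have := P0_card; lia.
move=> u; case: (boolP (v \in N u)) => xv; last first.
  by rewrite setI_U1_out //; apply: P0_valid.
have su : ~~ sup u.
  by apply/negP=> su; have := Hv u su; rewrite -Hsym -inN xv.
rewrite setI_U1_in // NP0_nsup // setU0 cards1.
have lu : ~~ leaf u.
  by apply/negP=> lu; move: sv; rewrite (sup_of _ lu) // Hsym -inN.
have : 0 < #|N u| by apply/card_gt0P; exists v.
move: lu; rewrite /is_leaf; lia.
Qed.

Local Open Scope ring_scope.

Definition sgnP (P : {set V}) := sgn_fun [ffun v => v \in P].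

Lemma sgnP_pm P v : sgnP P v = 1 \/ sgnP P v = -1.
Proof. by rewrite /sgnP /sgn_fun; case: ([ffun v => v \in P] v); [left|right]. Qed.

Lemma sgnP_set P : [set v | sgnP P v == 1] = P.
Proof.
apply/setP=> v; rewrite inE /sgnP /sgn_fun ffunE.
by case: (v \in P).
Qed.

Lemma weight_pm (f : V -> int) : (forall v, f v = 1 \/ f v = -1) ->
  weight f = #|[set v | f v == 1]|%:Z * 2 - #|V|%:Z.
Proof.
move=> Hf; rewrite /weight.
rewrite (eq_bigl (fun v => v \in [set: V])); last by move=> v; rewrite inE.
by rewrite sum_pm // setTI cardsT.
Qed.

Lemma gamma_ge P : validP P -> #|P|%:Z * 2 - #|V|%:Z <= gamma_st0 adj.
Proof.
move=> HP; have [_ H] := gamma_st0_spec adj.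
have <- : weight (sgnP P) = #|P|%:Z * 2 - #|V|%:Z.
  by rewrite weight_pm ?sgnP_set //; apply: sgnP_pm.
apply: H; split; first exact: sgnP_pm.
move=> v; rewrite /fsum sum_pm ?sgnP_set; last exact: sgnP_pm.
have := HP v; lia.
Qed.

Lemma gamma_att : exists P, validP P /\ gamma_st0 adj = #|P|%:Z * 2 - #|V|%:Z.
Proof.
have [[f [[Hf Hv] ->]] _] := gamma_st0_spec adj.
exists [set v | f v == 1]; split; last exact: weight_pm.
move=> v; have := Hv v; rewrite /fsum sum_pm //; lia.
Qed.

Lemma bound_eq : istdf_bound adj = - #|V|%:Z + 2 * (Bnd%:Z).
Proof. by []. Qed.

Local Close Scope ring_scope.

Hypothesis Hconn : forall x y : V, connect adj x y.
Hypothesis Hacyc : ~ (exists c : seq V, [/\ 3 <= size c, uniq c & cycle adj c]).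
Hypothesis Hn2 : 2 <= #|V|.

Lemma closed_all (S : {set V}) x : x \in S ->
  (forall a b, a \in S -> adj a b -> b \in S) -> forall y, y \in S.
Proof.
move=> xS cl y; have /connectP[p pth ->] := Hconn x y.
elim: p x xS pth => //= a p IH x xS /andP[xa pth].
exact: IH (cl x a xS xa) pth.
Qed.

Lemma card_all (S : {set V}) : (forall y, y \in S) -> #|V| <= #|S|.
Proof.
move=> H; rewrite -cardsT; apply: subset_leq_card; apply/subsetP=> y _; exact: H.
Qed.

Lemma has_nbr v : 0 < #|N v|.
Proof.
have : 0 < #|[set~ v]| by rewrite cardsC1; lia.
case/card_gt0P=> y; rewrite !inE => yv.
have /connectP[[|a p] pth E] := Hconn v y; first by move: yv; rewrite E eqxx.
by apply/card_gt0P; exists a; rewrite inN; case/andP: pth.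
Qed.

Lemma LS v : #|V| != 2 -> ~~ (leaf v && sup v).
Proof.
move=> n2; apply/negP=> /andP[lv /supP[x /andP[a lx]]].
have Nv := leaf_nbr lv a.
have Nx : N x = [set v] by apply: leaf_nbr lx _; rewrite Hsym.
have H := @closed_all [set v; x] v (setU11 _ _).
have : #|V| <= #|[set v; x]|.
  apply: card_all; apply: H => c b; rewrite !inE => /orP[] /eqP-> cb.
    have : b \in N v by rewrite inN.
    by rewrite Nv inE => /eqP->; rewrite eqxx orbT.
  have : b \in N x by rewrite inN.
  by rewrite Nx inE => /eqP->; rewrite eqxx.
move/eqP: n2 => n2; rewrite cards2; case: (v != x) => /= h; [by apply: n2; apply/eqP; rewrite eqn_leq h Hn2 | by have := leq_trans Hn2 h].
Qed.

Lemma odd_lem l k : (l + k) %/ 2 <= l %/ 2 -> 1 <= k -> ~~ odd l.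
Proof. have := modn2 l; case: (odd l) => /= h; lia. Qed.

Lemma slackE w : ~~ slack w = ((#|L w| + #|NL w|) %/ 2 <= #|L w| %/ 2).
Proof. by rewrite /slack -degsplit -leqNgt. Qed.

Lemma star_leaf c : (forall v, v != c -> adj c v) -> forall v, v != c -> leaf v.
Proof.
move=> Hc v vc; have Nv : N v = [set c].
  apply/setP=> u; rewrite inN inE; case: (eqVneq u c) => [->|uc].
    by rewrite Hsym Hc.
  apply/negP=> vu; apply: Hacyc; exists [:: c; v; u]; split=> //.
    rewrite /= !inE negb_or eq_sym vc eq_sym uc /= andbT.
    by apply/negP=> /eqP E; move: vu; rewrite E Hirr.
  by rewrite /= Hc // vu Hsym Hc.
by rewrite /is_leaf Nv cards1.
Qed.

Lemma NL_le1 w : sup w -> ~~ slack w -> #|NL w| <= 1.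
Proof. by move=> _; rewrite slackE; lia. Qed.

Lemma cond_omega :
  (forall w, sup w -> ~~ slack w) ->
  (forall v, ~~ leaf v -> ~~ sup v -> exists w, sup w && adj v w) ->
  in_Omega adj.
Proof.
move=> H1 H2; case: (eqVneq #|V| 2) => [E|n2]; first by left.
have ev w : sup w -> 0 < #|NL w| -> ~~ odd #|L w|.
  by move=> sw; apply: odd_lem; rewrite -slackE; apply: H1.
right; split.
- move=> w sw; have := L_pos sw; have := H1 w sw; rewrite /slack.
  have : #|N w| != 1 by apply: contraNN (LS w n2) => l; rewrite /is_leaf l sw.
  have := subset_leq_card (L_sub w).
  move=> h1 /eqP h2; lia.
- move=> w sw; apply: leq_trans (NL_le1 sw (H1 w sw)).
  apply: subset_leq_card; apply/subsetP=> u; rewrite !inE => /andP[-> su] /=.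
  by apply: contraNN (LS u n2) => ->.
- move=> [w [u [sw su wu]]].
  have onlyw y : adj w y -> leaf y \/ y = u.
    move=> wy; case: (boolP (leaf y)) => ly; [by left | right].
    have : #|NL w| <= 1 := NL_le1 sw (H1 w sw).
    move/card_le1P => H; have uN : u \in NL w.
      by rewrite inNL wu; apply: contraNN (LS u n2) => ->.
    by have := H u uN y; rewrite inNL wy ly inE => /esym/eqP.
  have onlyu y : adj u y -> leaf y \/ y = w.
    move=> wy; case: (boolP (leaf y)) => ly; [by left | right].
    have : #|NL u| <= 1 := NL_le1 su (H1 u su).
    move/card_le1P => H; have uN : w \in NL u.
      by rewrite inNL Hsym wu; apply: contraNN (LS w n2) => ->.
    by have := H w uN y; rewrite inNL wy ly inE => /esym/eqP.
  pose S := [set y | [|| y == w, y == u, adj w y | adj u y]].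
  have allS : forall y, y \in S.
    apply: (@closed_all S w); first by rewrite inE eqxx.
    move=> a b; rewrite !inE => /or4P[/eqP->|/eqP->|wa|ua] ab.
    + by rewrite ab !orbT.
    + by rewrite ab !orbT.
    + case: (onlyw a wa) => [la|E]; last by rewrite E in ab; rewrite ab !orbT.
      by rewrite (leaf_uniq la ab (_ : adj a w)) ?eqxx // Hsym.
    + case: (onlyu a ua) => [la|E]; last by rewrite E in ab; rewrite ab !orbT.
      by rewrite (leaf_uniq la ab (_ : adj a u)) ?eqxx ?orbT // Hsym.
  have cls y : [\/ y = w, y = u | leaf y].
    have := allS y; rewrite inE => /or4P[/eqP->|/eqP->|wy|uy].
    + by constructor 1.
    + by constructor 2.
    + by case: (onlyw y wy) => [?|->]; [constructor 3| constructor 2].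
    + by case: (onlyu y uy) => [?|->]; [constructor 3| constructor 1].
  split.
    by move=> v; case: (cls v) => [->|->|->]; rewrite ?sw ?su ?orbT.
  move=> w' sw'; apply: ev => //; apply/card_gt0P.
  case: (cls w') => [->|->|lw']; last by move: (LS w' n2); rewrite lw' sw'.
    by exists u; rewrite inNL wu; apply: contraNN (LS u n2) => ->.
  by exists w; rewrite inNL Hsym wu; apply: contraNN (LS w n2) => ->.
- move=> nadj.
  case: (boolP [exists c, sup c && (#|NL c| == 0)]) => [/existsP[c /andP[sc /eqP nc]]|].
    left; exists c.
    have cl a : adj c a -> leaf a.
      move=> ca; apply: contraT => la.
      have : 0 < #|NL c| by apply/card_gt0P; exists a; rewrite inNL ca.
      by rewrite nc.
    pose S := [set y | (y == c) || adj c y].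
    have allS : forall y, y \in S.
      apply: (@closed_all S c); first by rewrite inE eqxx.
      move=> a b; rewrite !inE => /orP[/eqP->|ca] ab; first by rewrite ab orbT.
      by rewrite (leaf_uniq (cl a ca) ab (_ : adj a c)) ?eqxx // Hsym.
    by move=> v vc; have := allS v; rewrite inE (negbTE vc).
  rewrite negb_exists => /forallP Hc.
  have k1 w : sup w -> 0 < #|NL w|.
    by move=> sw; have := Hc w; rewrite sw /= lt0n.
  right; split.
  + move=> w sw; have <- : #|NL w| = 1.
      by have := NL_le1 sw (H1 w sw); have := k1 w sw; lia.
    apply: eq_card => u; rewrite !inE; case: (boolP (adj w u)) => //= wu.
    case: (leaf u) => //=; apply/negP=> su; apply: nadj; exists w, u; split=> //.
  + move=> v lv sv; exact: H2.
  + by move=> w sw; apply: ev => //; apply: k1.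
Qed.

Lemma even_lem l k : ~~ odd l -> k <= 1 -> (l + k) %/ 2 <= l %/ 2.
Proof. have := modn2 l; case: (odd l) => /= h; lia. Qed.

Lemma NL0_nslack w : #|NL w| = 0 -> ~~ slack w.
Proof. by move=> h; rewrite slackE h addn0. Qed.

Lemma omega_cond : in_Omega adj ->
  (forall w, sup w -> ~~ slack w) /\
  (forall v, ~~ leaf v -> ~~ sup v -> exists w, sup w && adj v w).
Proof.
case=> [E | [Ha Hb Hb1 Hb2]].
  have all_leaf v : leaf v.
    have h1 := has_nbr v.
    have : #|N v| <= #|[set~ v]|.
      by apply: subset_leq_card; apply/subsetP=> u; rewrite !inE => vu; apply: contraTN vu => /eqP->; rewrite Hirr.
    rewrite cardsC1 E /is_leaf => h2; apply/eqP; lia.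
  split; last by move=> v; rewrite all_leaf.
  move=> w _; apply: NL0_nslack; apply/eqP; rewrite cards_eq0; apply/eqP/setP=> u.
  by rewrite inNL all_leaf andbF inE.
case: (boolP [exists w, [exists u, [&& sup w, sup u & adj w u]]]) => [|nadjb].
  case/existsP=> w /existsP[u /and3P[sw su wu]].
  have [ls ev] := Hb1 (ex_intro _ w (ex_intro _ u (And3 sw su wu))).
  split; last by move=> v lv sv; move: (ls v); rewrite (negbTE lv) (negbTE sv).
  move=> w' sw'; rewrite slackE; apply: even_lem; first exact: ev.
  apply: leq_trans (Hb w' sw'); apply: subset_leq_card; apply/subsetP=> y.
  rewrite inNL !inE => /andP[-> ly] /=; by move: (ls y); rewrite (negbTE ly).
have nadj : ~ (exists w u, [/\ sup w, sup u & adj w u]).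
  move=> [w [u [sw su wu]]]; move: nadjb; rewrite negb_exists => /forallP/(_ w).
  by rewrite negb_exists => /forallP/(_ u); rewrite sw su wu.
case: (Hb2 nadj) => [[c Hc] | [c1 c2 c3]].
  have lf := star_leaf Hc.
  split.
    move=> w sw; case: (eqVneq w c) => [->|wc].
      apply: NL0_nslack; apply/eqP; rewrite cards_eq0; apply/eqP/setP=> u.
      rewrite inNL inE; apply/negP=> /andP[cu]; rewrite lf //.
      by apply: contraTN cu => /eqP->; rewrite Hirr.
    by rewrite /slack (eqP (lf w wc)).
  move=> v lv sv; exfalso; case: (eqVneq v c) => [E|vc]; last by move: lv; rewrite lf.
  subst v; case/card_gt0P: (has_nbr c) => u; rewrite inN => cu.
  have uc : u != c by apply: contraTN cu => /eqP->; rewrite Hirr.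
  by move: sv; rewrite (sup_of cu (lf u uc)).
split; last exact: c2.
move=> w sw; rewrite slackE; apply: even_lem; first exact: c3.
rewrite -(c1 w sw) leq_eqVlt; apply/orP; left; apply/eqP.
apply: eq_card => u; rewrite !inE; case: (boolP (adj w u)) => //= wu.
case: (leaf u) => //=; symmetry; apply/negP=> su; apply: nadj; exists w, u; split=> //.
Qed.

End S.

Theorem theorem4p3 (V : finType) (adj : rel V)
  (Hsym : symmetric adj) (Hirr : irreflexive adj)
  (Htree : is_tree adj) (Hn : (2 <= #|V|)%N) :
  (istdf_bound adj <= gamma_st0 adj)%R /\
  (gamma_st0 adj = istdf_bound adj <-> in_Omega adj).
Proof.
case: Htree => Hconn Hacyc.
have lb : (istdf_bound adj <= gamma_st0 adj)%R.
  have := gamma_ge (P0_valid Hsym); have := P0_card Hsym.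
  rewrite bound_eq; lia.
split=> //; split.
  move=> Eg.
  case: (boolP ([forall w, is_support adj w ==> ~~ slack adj w] &&
    [forall v, ~~ is_leaf adj v ==> ~~ is_support adj v ==>
        [exists w, is_support adj w && adj v w]])).
    case/andP=> /forallP C1 /forallP C2.
    apply: (cond_omega Hsym Hconn Hn).
      by move=> w sw; have := C1 w; rewrite sw.
    by move=> v lv sv; have := C2 v; rewrite lv sv => /existsP.
  move=> nC; exfalso.
  have [P [HP HB]] : exists P, validP adj P /\ (Bnd adj < #|P|)%N.
    apply: (improve Hsym).
    move: nC; rewrite negb_and => /orP[].
      rewrite negb_forall => /existsP[w]; rewrite negb_imply => /andP[sw sl].
      by left; exists w; rewrite sw -[slack _ _]negbK.
    rewrite negb_forall => /existsP[v]; rewrite negb_imply => /andP[lv]; rewrite negb_imply => /andP[sv nx].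
    right; exists v; split=> // w sw; move: nx; rewrite negb_exists => /forallP/(_ w).
    by rewrite sw.
  have := gamma_ge HP; rewrite Eg bound_eq; lia.
move=> HO.
have [H1 H2] := omega_cond Hsym Hirr Hconn Hacyc Hn HO.
have [P [HP E]] := gamma_att adj.
have := upper Hsym H1 H2 HP.
move: lb; rewrite E bound_eq; lia.
Qed.
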